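(* Let $M$ be a connected matroid on $E$, and let $\mathfrak{S}\subseteq\mathcal{P}(E)$ be a collection such that (i) $\mathfrak{S}$ contains every set $S\subseteq E$ for which both $M|_S$ and $M/S$ are connected, and (ii) whenever $S\in\mathfrak{S}$, every connected component of $M|_S$ is also in $\mathfrak{S}$. Then $\mathrm{ec}_{\mathfrak{S}}(M)=\mathrm{ec}(M)$.
   Context: $M$ has rank $k$. A matroid is connected if it is not a direct sum of two matroids on nonempty sets; its connected components are the ground sets of the connected summands in its decomposition into connected matroids. $M|_S$ is the restriction and $M/S$ the contraction (on $E-S$, with $\mathrm{rk}_{M/S}(A)=\mathrm{rk}(A\cup S)-\mathrm{rk}(S)$). For $\mathfrak{S}\subseteq\mathcal{P}(E)$ and $S\in\mathfrak{S}$, $c(S)=\#S-\mathrm{rk}\,S$, $a_{\mathfrak{S}}(S)=c(S)-\sum_{T\in\mathfrak{S},\,T\subsetneq S}a_{\mathfrak{S}}(T)$ (recursively, $a_{\mathfrak{S}}(\varnothing)=0$), $\mathrm{ec}_{\mathfrak{S}}(M)=\sum_{S\in\mathfrak{S}}(k-\mathrm{rk}\,S)a_{\mathfrak{S}}(S)$, and $\mathrm{ec}(M)=\mathrm{ec}_{\mathcal{P}(E)}(M)$. *)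

(* Defs.v *)
From mathcomp Require Import all_boot all_order all_algebra.
Set Implicit Arguments. Unset Strict Implicit. Unset Printing Implicit Defensive.
Import GRing.Theory Num.Theory.

Section Matroid.
Variable E : finType.

Definition is_matroid_rank (rk : {set E} -> nat) : Prop :=
  [/\ forall A : {set E}, rk A <= #|A|,
      forall A B : {set E}, A \subset B -> rk A <= rk B
    & forall A B : {set E}, rk (A :|: B) + rk (A :&: B) <= rk A + rk B].

(* The matroid with rank function f on ground set G (only subsets of G matter)
   is a direct sum of matroids on the nonempty sets S and T. *)
Definition direct_sum_split (f : {set E} -> nat) (G S T : {set E}) : Prop :=
  [/\ S != set0, T != set0, S :&: T = set0, S :|: T = G
    & forall A : {set E}, A \subset G -> f A = f (A :&: S) + f (A :&: T)].

Definition connected_on (f : {set E} -> nat) (G : {set E}) : Prop :=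
  ~ exists S T : {set E}, direct_sum_split f G S T.

Definition restr_connected (rk : {set E} -> nat) (S : {set E}) : Prop :=
  connected_on rk S.

Definition contr_rank (rk : {set E} -> nat) (S : {set E}) : {set E} -> nat :=
  fun A => rk (A :|: S) - rk S.

Definition contr_connected (rk : {set E} -> nat) (S : {set E}) : Prop :=
  connected_on (contr_rank rk S) (~: S).

Definition connected_decomposition (f : {set E} -> nat) (G : {set E})
    (P : {set {set E}}) : Prop :=
  [/\ partition P G,
      forall A : {set E}, A \subset G -> f A = \sum_(B in P) f (A :&: B)
    & forall B, B \in P -> connected_on f B].

Definition component_of_restr (rk : {set E} -> nat) (S C : {set E}) : Prop :=
  exists P : {set {set E}}, connected_decomposition rk S P /\ C \in P.

Definition nullity (rk : {set E} -> nat) (S : {set E}) : int :=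
  (#|S|%:Z - (rk S)%:Z)%R.

Fixpoint a_aux (rk : {set E} -> nat) (Sf : {set {set E}}) (n : nat)
    (S : {set E}) : int :=
  match n with
  | 0 => 0%R
  | n'.+1 => (nullity rk S - \sum_(T in Sf | T \proper S) a_aux rk Sf n' T)%R
  end.

Definition a_coef (rk : {set E} -> nat) (Sf : {set {set E}}) (S : {set E}) : int :=
  a_aux rk Sf #|S|.+1 S.

Definition ec_of (rk : {set E} -> nat) (Sf : {set {set E}}) : int :=
  (\sum_(S in Sf) ((rk setT)%:Z - (rk S)%:Z) * a_coef rk Sf S)%R.

Definition ec (rk : {set E} -> nat) : int := ec_of rk setT.

End Matroid.

(* Main.v *)
Require Import Defs.
From mathcomp Require Import all_boot all_order all_algebra.
From mathcomp Require Import zify.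
From Stdlib Require Import ClassicalEpsilon Classical.
Set Implicit Arguments. Unset Strict Implicit. Unset Printing Implicit Defensive.
Import GRing.Theory Num.Theory.

Definition pb (P : Prop) : bool := if excluded_middle_informative P then true else false.
Lemma pbP P : reflect P (pb P).
Proof. rewrite /pb; case: excluded_middle_informative => h; by constructor. Qed.

Section Mob.
Variable E : finType.
Local Open Scope ring_scope.
Implicit Types (f : {set E} -> int) (F : {set {set E}}) (S T : {set E}).

Fixpoint mob f F n S : int := match n with
  | 0 => 0 | n'.+1 => f S - \sum_(T in F | T \proper S) mob f F n' T end.
Definition mb f F S := mob f F #|S|.+1 S.

Lemma mob_fuel f F n m S : (#|S| < n)%N -> (#|S| < m)%N -> mob f F n S = mob f F m S.
Proof.
elim: n m S => [|n IH] [|m] S //= hn hm.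
congr (_ - _); apply: eq_bigr => T /andP[_ hT].
have h := proper_card hT; apply: IH; lia.
Qed.

Lemma mbE f F S : mb f F S = f S - \sum_(T in F | T \proper S) mb f F T.
Proof.
rewrite /mb /=; congr (_ - _); apply: eq_bigr => T /andP[_ hT].
have h := proper_card hT; transitivity (mob f F #|T|.+1 T) => //; apply: mob_fuel; lia.
Qed.

Lemma mb_sum f F S : S \in F -> \sum_(T in F | T \subset S) mb f F T = f S.
Proof.
move=> hS; rewrite (bigD1 S) /=; last by rewrite hS subxx.
rewrite [mb f F S]mbE.
rewrite (eq_bigl (fun T => (T \in F) && (T \proper S))); first by rewrite subrK.
by move=> T; rewrite properEneq; case: (T \in F); case: (T \subset S); case: (T == S).
Qed.

Lemma mb_restr f F1 F2 : F1 \subset F2 ->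
  (forall S, S \in F2 -> S \notin F1 -> mb f F2 S = 0) -> forall S, mb f F1 S = mb f F2 S.
Proof.
move=> h1 h2 S; elim: {S}_.+1 {-2}S (ltnSn #|S|) => // n IH S hS.
rewrite mbE [RHS]mbE; congr (_ - _).
rewrite big_mkcond [RHS]big_mkcond; apply: eq_bigr => T _.
case hT1: (T \in F1) => /=.
  rewrite (subsetP h1 _ hT1) /=; case hTS: (T \proper S) => //.
  apply: IH; have := proper_card hTS; lia.
case: ifP => // /andP[hT2 _]; by rewrite h2 // hT1.
Qed.

Definition mbu f F S := mb (fun A => f (~: A)) [set A | ~: A \in F] (~: S).

Lemma mbu_sum f F S : S \in F -> \sum_(U in F | S \subset U) mbu f F U = f S.
Proof.
move=> hS.
have := mb_sum (fun A => f (~:A)) (F := [set A | ~:A \in F]) (S := ~:S).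
rewrite inE setCK => /(_ hS) <-.
rewrite [RHS](reindex_inj (@setC_inj E)) /=; apply: eq_bigl => U.
by rewrite inE setCK setCS.
Qed.

Lemma mb_swap c w F :
  \sum_(S in F) w S * mb c F S = \sum_(U in F) c U * mbu w F U.
Proof.
transitivity (\sum_(S in F) \sum_(U in F | S \subset U) mbu w F U * mb c F S).
  by apply: eq_bigr => S hS; rewrite -mulr_suml mbu_sum.
rewrite (exchange_big_dep (fun U => U \in F)) /=; last by move=> i j _ /andP[].
apply: eq_bigr => U hU; rewrite -mulr_sumr.
rewrite (eq_bigl (fun S => (S \in F) && (S \subset U))); first by rewrite mb_sum // mulrC.
by move=> S; rewrite hU.
Qed.


Lemma mb_support f F (good : {set E} -> Prop) :
  f set0 = 0 ->
  (forall S, S \in F -> ~ good S -> S != set0 ->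
     exists P : {set {set E}}, [/\ partition P S,
        (forall B, B \in P -> (B \in F) && (B \proper S)),
        f S = \sum_(B in P) f B &
        forall T, T \in F -> T \proper S -> good T -> T != set0 ->
           exists2 B, B \in P & T \subset B]) ->
  forall S, S \in F -> mb f F S != 0 -> good S /\ S != set0.
Proof.
move=> f0 hP S; elim: {S}_.+1 {-2}S (ltnSn #|S|) => // n IH S hS hSF hmb.
have hne : S != set0.
  apply: contra hmb => /eqP ->; rewrite mbE big1 ?f0 ?subr0 //.
  by move=> T /andP[_ /proper_card]; rewrite cards0.
case: (classic (good S)) => hg; first by [].
have [P [hpart hB hfS hT]] := hP S hSF hg hne.
case/negP: hmb; apply/eqP; rewrite mbE.
have -> : \sum_(T in F | T \proper S) mb f F T =
          \sum_(B in P) \sum_(T in F | T \subset B) mb f F T.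
  rewrite (exchange_big_dep (fun T => T \in F)) /=; last by move=> B T _ /andP[].
  rewrite big_mkcondr; apply: eq_bigr => T hTF.
  case: (eqVneq (mb f F T) 0) => h0.
    by rewrite h0 big1 //; case: ifP.
  case hTS: (T \proper S).
    have hc := proper_card hTS.
    have [g ne] := IH T ltac:(lia) hTF h0.
    have [B0 hB0 hTB0] := hT T hTF hTS g ne.
    rewrite (big_pred1 B0) // => B /=; rewrite hTF /=.
    case: (eqVneq B B0) => [-> | hBB]; first by rewrite hB0 hTB0.
    apply/negbTE/negP => /andP[hBP hTB].
    case/and3P: hpart => _ htriv _.
    have hd := disjoint_setI0 ((trivIsetP htriv) _ _ hBP hB0 hBB).
    have : T \subset B :&: B0 by rewrite subsetI hTB hTB0.
    by rewrite hd subset0 (negbTE ne).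
  rewrite big1 // => B /andP[hBP /andP[_ hTB]].
  have /andP[_ hBS] := hB B hBP.
  by rewrite (sub_proper_trans hTB hBS) in hTS.
rewrite (eq_bigr f) ?hfS ?subrr // => B hBP.
have /andP[hBF _] := hB B hBP.
exact: mb_sum.
Qed.

End Mob.
Ltac prep x := repeat match goal with
 | H : is_true (?A \subset ?B) |- _ => move: (subsetP H x) => /implyP; clear H
 | H : @eq _ _ _ |- _ => move/setP: (H) => /(_ x); clear H
 end.
Ltac setsolve :=
  match goal with
  | |- @eq _ _ _ => let x := fresh "x" in apply/setP => x; prep x; rewrite ?inE;
        by repeat (case: (_ \in _))
  | |- is_true (_ \subset _) => let x := fresh "x" in apply/subsetP => x; prep x; rewrite ?inE;
        by repeat (case: (_ \in _))
  end.

Section Mat.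
Variable E : finType.
Implicit Types (f : {set E} -> nat) (G S T A B X Y : {set E}).

Lemma test A B C : A \subset B -> B :&: C = set0 -> A :&: C = set0.
Proof. move=> h1 h2; setsolve. Qed.
Lemma test2 A B C : A \subset B -> B :&: C = set0 -> A \subset ~: C.
Proof. move=> h1 h2; setsolve. Qed.

Lemma block_sub P G B : partition P G -> B \in P -> B \subset G.
Proof. by case/and3P => /eqP <- _ _ hB; apply: bigcup_sup. Qed.

Lemma conn_sub f T S1 S2 : connected_on f T ->
  (forall A, A \subset T -> f A = f (A :&: S1) + f (A :&: S2)) ->
  S1 :&: S2 = set0 -> T \subset S1 :|: S2 -> T :&: S1 != set0 -> T \subset S1.
Proof.
move=> hc hadd hd hT hne; apply/negPn/negP => hns; apply: hc.
exists (T :&: S1), (T :&: S2); split => //.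
- have [x hxT hxS1] := subsetPn hns; apply/set0Pn; exists x.
  by rewrite inE hxT; move: (subsetP hT x hxT); rewrite inE (negbTE hxS1).
- setsolve.
- setsolve.
- move=> A hA; rewrite hadd //; congr (f _ + f _); setsolve.
Qed.

Lemma decomp_split f G P B : f set0 = 0 -> connected_decomposition f G P -> B \in P ->
  forall A, A \subset G -> f A = f (A :&: B) + f (A :&: (G :\: B)).
Proof.
move=> f0 [hpart hadd _] hB A hA.
have hBG := block_sub hpart hB.
have htriv : trivIset P by case/and3P: hpart.
rewrite (hadd A hA) (bigD1 B) //=; congr (_ + _).
have hs : A :&: (G :\: B) \subset G by clear -hA; setsolve.
rewrite (hadd _ hs) [RHS](bigD1 B) //=.
have -> : A :&: (G :\: B) :&: B = set0 by clear; setsolve.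
rewrite f0 add0n; apply: eq_bigr => B' /andP[hB' hne]; congr f.
have hB'G := block_sub hpart hB'.
have hd := disjoint_setI0 ((trivIsetP htriv) _ _ hB' hB hne).
clear -hB'G hd; setsolve.
Qed.

Lemma decomp_exists f G : f set0 = 0 -> exists P, connected_decomposition f G P.
Proof.
move=> f0; elim: {G}_.+1 {-2}G (ltnSn #|G|) => // n IH G hG.
case: (classic (connected_on f G)) => hc.
  case: (eqVneq G set0) => [-> | hne].
    exists set0; split.
    - by rewrite partition_set0.
    - by move=> A; rewrite subset0 => /eqP ->; rewrite big_set0 f0.
    - by move=> B; rewrite in_set0.
  exists [set G]; split.
  - by rewrite /partition cover1 eqxx trivIset1 /= inE eq_sym hne.
  - by move=> A hA; rewrite big_set1 (setIidPl hA).
  - by move=> B; rewrite inE => /eqP ->.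
have [S [T [hS hT hST hSTG hadd]]] : exists S T, direct_sum_split f G S T by apply: NNPP.
have hc1 := cardsUI S T; rewrite hST hSTG cards0 in hc1.
move: hS hT; rewrite -!card_gt0 => hS hT.
have [P1 [hp1 ha1 hc1']] := IH S ltac:(lia).
have [P2 [hp2 ha2 hc2']] := IH T ltac:(lia).
have hdP : [disjoint P1 & P2].
  rewrite -setI_eq0; apply/eqP/setP => B; rewrite !inE.
  apply/negbTE/negP => /andP[h1 h2].
  have s1 := block_sub hp1 h1; have s2 := block_sub hp2 h2.
  have : B \subset set0 by rewrite -hST subsetI s1 s2.
  by rewrite subset0 (negbTE (partition_neq0 hp1 h1)).
exists (P1 :|: P2); split.
- case/and3P: hp1 => /eqP hcv1 ht1 h01; case/and3P: hp2 => /eqP hcv2 ht2 h02.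
  apply/and3P; split.
  + by rewrite /cover bigcup_setU -/(cover P1) -/(cover P2) hcv1 hcv2 hSTG.
  + by apply: trivIsetU => //; rewrite hcv1 hcv2 -setI_eq0 hST.
  + by rewrite in_setU negb_or h01 h02.
- move=> A hA; rewrite hadd // (eq_bigl (mem [predU P1 & P2])); last first.
    by move=> B; rewrite !inE.
  rewrite bigU //; congr (_ + _).
  + rewrite ha1 ?subsetIr //; apply: eq_bigr => B hB; congr f.
    have := block_sub hp1 hB; clear; move=> h; setsolve.
  + rewrite ha2 ?subsetIr //; apply: eq_bigr => B hB; congr f.
    have := block_sub hp2 hB; clear; move=> h; setsolve.
- by move=> B; rewrite inE => /orP[]; [apply: hc1' | apply: hc2'].
Qed.


Lemma conn_congr f g G : (forall A, A \subset G -> f A = g A) ->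
  connected_on f G -> connected_on g G.
Proof.
move=> hfg hc [S [T [h1 h2 h3 h4 h5]]]; apply: hc; exists S, T; split => // A hA.
have hS : A :&: S \subset G by apply: subset_trans (subsetIl _ _) hA.
have hT : A :&: T \subset G by apply: subset_trans (subsetIl _ _) hA.
by rewrite (hfg A hA) (hfg _ hS) (hfg _ hT) h5.
Qed.

Variable rk : {set E} -> nat.
Hypothesis hr : is_matroid_rank rk.

Lemma rk0 : rk set0 = 0.
Proof. by case: hr => h _ _; move: (h set0); rewrite cards0; lia. Qed.

Lemma rkmono A B : A \subset B -> rk A <= rk B.
Proof. by case: hr => _ h _; apply: h. Qed.

Lemma rksub A B : rk (A :|: B) + rk (A :&: B) <= rk A + rk B.
Proof. by case: hr => _ _ h; apply: h. Qed.

Lemma sep_rank X Y : X :&: Y = set0 -> rk (X :|: Y) = rk X + rk Y ->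
  forall A, A \subset X :|: Y -> rk A = rk (A :&: X) + rk (A :&: Y).
Proof.
move=> hd he A hA.
have s1 := rksub (A :&: X) (A :&: Y).
have e1 : (A :&: X) :|: (A :&: Y) = A by setsolve.
have e2 : (A :&: X) :&: (A :&: Y) = set0 by setsolve.
rewrite e1 e2 rk0 in s1.
have s2 := rksub A X.
have e3 : A :|: X = X :|: (A :&: Y) by setsolve.
have e4 : A :&: X = A :&: X by [].
rewrite e3 in s2.
have s3 := rksub (X :|: (A :&: Y)) Y.
have e5 : X :|: (A :&: Y) :|: Y = X :|: Y by setsolve.
have e6 : (X :|: (A :&: Y)) :&: Y = A :&: Y by setsolve.
rewrite e5 e6 in s3.
lia.
Qed.

Definition cr U := contr_rank rk U.

Lemma cr0 U : cr U set0 = 0.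
Proof. by rewrite /cr /contr_rank set0U subnn. Qed.

Section Block.
Variables (U : {set E}) (P : {set {set E}}) (D : {set E}).
Hypothesis hP : connected_decomposition (cr U) (~: U) P.
Hypothesis hD : D \in P.

Lemma D_sub : D \subset ~: U.
Proof. by case: hP => hp _ _; apply: block_sub hp hD. Qed.

Lemma D_ne : D != set0.
Proof. by case: hP => hp _ _; apply: partition_neq0 hp hD. Qed.

Lemma I_id X Y1 Y2 Y3 : X \subset ~: U -> X :|: U = Y1 -> (X :&: D) :|: U = Y2 ->
  (X :\: D) :|: U = Y3 -> rk Y1 + rk U = rk Y2 + rk Y3.
Proof.
move=> hX <- <- <-.
have := decomp_split (cr0 U) hP hD hX.
rewrite /cr /contr_rank.
have -> : X :&: (~: U :\: D) = X :\: D by setsolve.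
have := rkmono (subsetUr X U); have := rkmono (subsetUr (X :&: D) U).
have := rkmono (subsetUr (X :\: D) U).
lia.
Qed.

Lemma compD_rank : rk setT + rk U = rk (D :|: U) + rk (~: D).
Proof.
have hD' := D_sub.
apply: (I_id (X := ~: U)) => //; setsolve.
Qed.

Lemma L1a : contr_connected rk (~: D).
Proof.
rewrite /contr_connected setCK.
case: hP => _ _ hc; apply: conn_congr (hc D hD) => A hA.
have hD' := D_sub.
have := I_id (X := A :|: (~: U :\: D)) (Y1 := A :|: ~: D) (Y2 := A :|: U) (Y3 := ~: D).
have -> : A :|: (~: U :\: D) \subset ~: U by setsolve.
have -> : A :|: (~: U :\: D) :|: U = A :|: ~: D by setsolve.
have -> : (A :|: (~: U :\: D)) :&: D :|: U = A :|: U by setsolve.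
have -> : (A :|: (~: U :\: D)) :\: D :|: U = ~: D by setsolve.
move=> /(_ isT erefl erefl erefl) h.
rewrite /cr /contr_rank; lia.
Qed.

Hypothesis hM : connected_on rk setT.
Hypothesis hU : restr_connected rk U.

Lemma L1b_core S1 S2 : S1 :&: S2 = set0 -> S1 :|: S2 = ~: D -> S2 != set0 ->
  U \subset S1 -> rk (~: D) = rk S1 + rk S2 -> False.
Proof.
move=> h12 hu hS2 hUS1 hr12.
have hD' := D_sub.
have i1 := compD_rank.
have i2 : rk (S1 :|: D) + rk U = rk (D :|: U) + rk S1.
  apply: (I_id (X := (S1 :\: U) :|: D)); setsolve.
have ht : rk setT = rk (S1 :|: D) + rk S2 by lia.
apply: hM; exists (S1 :|: D), S2; split => //.
- by have /set0Pn [x hx] := D_ne; apply/set0Pn; exists x; rewrite inE hx orbT.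
- setsolve.
- setsolve.
- move=> A _; have eT : S1 :|: D :|: S2 = setT by setsolve.
  by apply: sep_rank; [setsolve | rewrite eT | rewrite eT subsetT].
Qed.

Lemma L1b : restr_connected rk (~: D).
Proof.
move=> [S1 [S2 [h1 h2 h3 h4 h5]]].
have hD' := D_sub.
have hUD : U \subset ~: D by setsolve.
have hr12 : rk (~: D) = rk S1 + rk S2.
  rewrite h5 //; congr (rk _ + rk _); setsolve.
have hadd : forall A, A \subset U -> rk A = rk (A :&: S1) + rk (A :&: S2).
  by move=> A hA; apply: h5; apply: subset_trans hA hUD.
case: (eqVneq (U :&: S1) set0) => hUS.
  have hUS2 : U \subset S2 by setsolve.
  by apply: (@L1b_core S2 S1) => //; [setsolve | setsolve | lia].
have hUS1 : U \subset S1.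
  by apply: (conn_sub hU hadd h3) => //; rewrite h4.
by apply: (@L1b_core S1 S2).
Qed.

Lemma inD (V : {set E}) : U \subset V -> contr_connected rk V -> ~: V :&: D != set0 -> ~: V \subset D.
Proof.
move=> hUV hV hne.
have hD' := D_sub.
have hadd : forall A, A \subset ~: V ->
   cr V A = cr V (A :&: D) + cr V (A :&: ~: D).
  move=> A hA.
  pose W := V :\: U.
  have i1 : rk (A :|: V) + rk U = rk (((A :&: D) :|: (W :&: D)) :|: U) +
                                  rk (((A :&: ~: D) :|: (W :\: D)) :|: U).
    apply: (I_id (X := A :|: W)); rewrite /W; setsolve.
  have i2 : rk ((A :&: D) :|: V) + rk U = rk (((A :&: D) :|: (W :&: D)) :|: U) +
                                  rk ((W :\: D) :|: U).
    apply: (I_id (X := (A :&: D) :|: W)); rewrite /W; setsolve.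
  have i3 : rk ((A :&: ~: D) :|: V) + rk U = rk ((W :&: D) :|: U) +
                                  rk (((A :&: ~: D) :|: (W :\: D)) :|: U).
    apply: (I_id (X := (A :&: ~: D) :|: W)); rewrite /W; setsolve.
  have i4 : rk V + rk U = rk ((W :&: D) :|: U) + rk ((W :\: D) :|: U).
    apply: (I_id (X := W)); rewrite /W; setsolve.
  rewrite /cr /contr_rank.
  have := rkmono (subsetUr A V); have := rkmono (subsetUr (A :&: D) V).
  have := rkmono (subsetUr (A :&: ~: D) V).
  lia.
apply: (conn_sub hV hadd); [setsolve | setsolve | exact: hne].
Qed.

End Block.

End Mat.

Section Final.
Variable E : finType.
Variable rk : {set E} -> nat.
Hypothesis hr : is_matroid_rank rk.
Local Open Scope ring_scope.

Definition w (S : {set E}) : int := (rk setT)%:Z - (rk S)%:Z.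
Definition cc (S : {set E}) : int := nullity rk S.
Definition Conn : {set {set E}} := [set S | pb (restr_connected rk S)].
Definition K : {set {set E}} := [set S | pb (restr_connected rk S /\ contr_connected rk S)].

Lemma a_aux_mob (Sf : {set {set E}}) n S : a_aux rk Sf n S = mob cc Sf n S.
Proof. by elim: n S => //= n IH S; congr (_ - _); apply: eq_bigr => T _; exact: IH. Qed.

Lemma ec_ofE (Sf : {set {set E}}) : ec_of rk Sf = \sum_(S in Sf) w S * mb cc Sf S.
Proof. by apply: eq_bigr => S _; rewrite /a_coef a_aux_mob. Qed.

Lemma cc0 : cc set0 = 0.
Proof. by rewrite /cc /nullity cards0 (rk0 hr). Qed.

Lemma step1 (Sf : {set {set E}}) : (forall S C, S \in Sf -> component_of_restr rk S C -> C \in Sf) ->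
  \sum_(S in Sf) w S * mb cc Sf S = \sum_(S in Sf :&: Conn) w S * mb cc (Sf :&: Conn) S.
Proof.
move=> hcl.
have hsupp := @mb_support E cc Sf (restr_connected rk) cc0.
have {hsupp} hsupp : forall S, S \in Sf -> mb cc Sf S != 0 -> restr_connected rk S /\ S != set0.
  apply: hsupp => S hS hg hne.
  have [P hP] := decomp_exists (f := rk) S (rk0 hr).
  have [hpart hadd hc] := hP.
  exists P; split => //.
  - move=> B hB; apply/andP; split.
      by apply: (hcl S) => //; exists P.
    rewrite properEneq (block_sub hpart hB) andbT.
    by apply/eqP => e; apply: hg; rewrite -e; apply: hc.
  - rewrite /cc /nullity (card_partition hpart) (hadd S (subxx S)).
    rewrite !(big_morph Posz PoszD (erefl _)) -sumrB; apply: eq_bigr => B hB.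
    by rewrite (setIidPr (block_sub hpart hB)).
  - move=> T hT hTS hgT hTne.
    have /set0Pn [x hx] := hTne.
    have hxS : x \in cover P by case/and3P: hpart => /eqP ->; rewrite (subsetP (proper_sub hTS)).
    exists (pblock P x); first exact: pblock_mem.
    have hdec := decomp_split (rk0 hr) hP (pblock_mem hxS).
    apply: (conn_sub hgT).
    + move=> A hA; apply: hdec; apply: subset_trans hA (proper_sub hTS).
    + setsolve.
    + have h := proper_sub hTS; setsolve.
    + by apply/set0Pn; exists x; rewrite inE hx mem_pblock.
have hsub : Sf :&: Conn \subset Sf by apply: subsetIl.
have hz : forall S, S \in Sf -> S \notin Sf :&: Conn -> mb cc Sf S = 0.
  move=> S hS; rewrite inE hS inE /= => hn; apply/eqP; apply: contraNT hn => h.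
  by have [g _] := hsupp S hS h; apply/pbP.
rewrite (big_setID (A := Sf) Conn) /= [X in _ + X]big1 ?addr0; last first.
  by move=> S; rewrite inE => /andP[hn hS]; rewrite hz ?mulr0 // inE hS.
by apply: eq_bigr => S _; rewrite (mb_restr hsub hz).
Qed.


Hypothesis hM : connected_on rk setT.

Definition fC (A : {set E}) : int := w (~: A).
Definition FC (F : {set {set E}}) : {set {set E}} := [set A | ~: A \in F].

Lemma memFC (F : {set {set E}}) A : (A \in FC F) = (~: A \in F).
Proof. by rewrite inE. Qed.

Lemma fC0 : fC set0 = 0.
Proof. by rewrite /fC /w setC0 subrr. Qed.

Lemma suppC (F : {set {set E}}) : K \subset F -> F \subset Conn ->
  forall A, A \in FC F -> mb fC (FC F) A != 0 -> contr_connected rk (~: A) /\ A != set0.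
Proof.
move=> hKF hFC.
apply: (mb_support fC0) => S hS hg hne.
have hSF : ~: S \in F by rewrite inE in hS.
have hU : restr_connected rk (~: S) by move/(subsetP hFC): hSF; rewrite inE => /pbP.
have [P hP] := decomp_exists (f := cr rk (~: S)) (~: ~: S) (cr0 rk (~:S)).
have [hpart hadd hc] := hP.
have hDs : forall D, D \in P -> D \subset S.
  by move=> D hD; have := D_sub hP hD; rewrite setCK.
exists P; split.
- by rewrite setCK in hpart.
- move=> D hD; apply/andP; split.
    rewrite inE; apply: (subsetP hKF); rewrite inE; apply/pbP; split.
      exact: (L1b hr hP hD hM hU).
    exact: (L1a hr hP hD).
  rewrite properEneq hDs // andbT.
  apply/eqP => e; apply: hg; rewrite /contr_connected setCK; move: (hc D hD); rewrite e; exact.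
- have hs : forall D, D \in P -> (rk setT = rk (~: D) + cr rk (~:S) D)%N.
    move=> D hD; have := compD_rank hr hP hD; rewrite /cr /contr_rank.
    have := rkmono hr (subsetUr D (~: S)); lia.
  have ht : (rk setT = rk (~:S) + \sum_(D in P) cr rk (~:S) D)%N.
    have := hadd (~: ~: S) (subxx _); rewrite {1}/cr /contr_rank setUC setUCr.
    rewrite (eq_bigr (cr rk (~: S))); last first.
      by move=> D hD; rewrite (setIidPr (D_sub hP hD)).
    have := rkmono hr (subsetT (~: S)) => h1 h2; rewrite -h2 subnKC //.
  rewrite /fC /w.
  have -> : \sum_(B in P) ((rk setT)%:Z - (rk (~: B))%:Z) = \sum_(D in P) (cr rk (~:S) D)%:Z.
    by apply: eq_bigr => D hD; have := hs D hD; lia.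
  by rewrite -(big_morph Posz PoszD (erefl _)) ht PoszD addrAC subrr add0r.
- move=> T hT hTS hgT hTne.
  have /set0Pn [x hx] := hTne.
  have hxS : x \in cover P.
    by case/and3P: hpart => /eqP ->; rewrite setCK (subsetP (proper_sub hTS)).
  exists (pblock P x); first exact: pblock_mem.
  have hUV : ~: S \subset ~: T by rewrite setCS proper_sub.
  have := inD hr hP (pblock_mem hxS) hUV hgT; rewrite setCK; apply.
  by apply/set0Pn; exists x; rewrite in_setI hx mem_pblock hxS.
Qed.

Lemma step2 (F : {set {set E}}) : K \subset F -> F \subset Conn ->
  \sum_(S in F) w S * mb cc F S = \sum_(U in K) cc U * mbu w K U.
Proof.
move=> hKF hFC; rewrite mb_swap.
have hz : forall A, A \in FC F -> A \notin FC K -> mb fC (FC F) A = 0.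
  move=> A hA hnK; apply/eqP; apply: contraNT hnK => h.
  have [g _] := suppC hKF hFC hA h.
  rewrite inE in hA; rewrite !inE; apply/pbP; split => //.
  by move/(subsetP hFC): hA; rewrite inE => /pbP.
have hsub : FC K \subset FC F.
  by apply/subsetP => A; rewrite !memFC; apply: (subsetP hKF).
have e : forall U, mbu w K U = mbu w F U := fun U => mb_restr hsub hz (~: U).
rewrite (big_setID (A := F) K) (setIidPr hKF) /= [X in _ + X]big1 ?addr0; last first.
  move=> U; rewrite inE => /andP[hnK hUF].
  have -> : mbu w F U = 0 by apply: hz; rewrite inE setCK.
  by rewrite mulr0.
by apply: eq_bigr => U _; rewrite e.
Qed.

End Final.

Theorem theorem6p7 (E : finType) (rk : {set E} -> nat) (Sf : {set {set E}}) :
  is_matroid_rank rk ->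
  connected_on rk setT ->
  (forall S : {set E}, restr_connected rk S -> contr_connected rk S -> S \in Sf) ->
  (forall S C : {set E}, S \in Sf -> component_of_restr rk S C -> C \in Sf) ->
  ec_of rk Sf = ec rk.
Proof.
move=> hr hM hi hii.
have hKC : K rk \subset Conn rk.
  by apply/subsetP => S; rewrite !inE => /pbP [h _]; apply/pbP.
have hKS : K rk \subset Sf :&: Conn rk.
  rewrite subsetI hKC andbT; apply/subsetP => S; rewrite inE => /pbP [h1 h2].
  exact: hi.
rewrite /ec !ec_ofE (step1 hr hii) (step2 hr hM hKS (subsetIr _ _)).
rewrite (step1 hr (Sf := setT)) ?setTI; last by move=> *; rewrite inE.
by rewrite (step2 hr hM hKC (subxx _)).
Qed.
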